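(* Let $\mathbb{L}/\mathbb{K}$ be a finite Galois extension with Galois group $G$ and let $\mathcal{A},\mathcal{B},\mathcal{C}\subseteq\mathbb{L}[G]$ be $\mathbb{L}$-linear codes with $\mathcal{B}\circ\mathcal{A}\subseteq\mathcal{C}^\perp$. Let $r=c+e$ with $c\in\mathcal{C}$, $e\in\mathbb{L}[G]$, and let $I=\mathrm{supp}(e)$. Then (1) $\mathcal{K}(r)=\mathcal{K}(e)$; (2) $\mathrm{Short}_I(\mathcal{A})\subseteq\mathcal{K}(e)$; (3) if $\mathrm{rk}_\mathbb{K}(e)<d(\mathcal{B}^\perp)$, then $\mathrm{Short}_I(\mathcal{A})=\mathcal{K}(e)$.
   Context: $\mathbb{L}[G]$ has composition product $(ag)\circ(bh)=(a\,g(b))(gh)$; $a=\sum a_gg$ acts on $\mathbb{L}$ as $x\mapsto\sum a_gg(x)$, with kernel $\ker(a)\subseteq\mathbb{L}$ and rank $\mathrm{rk}_\mathbb{K}(a)$. A code is an $\mathbb{L}$-subspace of $\mathbb{L}[G]$; its minimum distance $d(\mathcal{D})$ is the minimum of $\mathrm{rk}_\mathbb{K}(x)$ over nonzero $x\in\mathcal{D}$. $\langle\sum a_gg,\sum b_gg\rangle_{\mathbb{L}[G]}=\sum a_gb_g$ and $\mathcal{D}^\perp$ is the orthogonal for this form. $\mathcal{B}\circ\mathcal{A}=\mathrm{span}_\mathbb{L}\{b\circ a:a\in\mathcal{A},b\in\mathcal{B}\}$. The support $\mathrm{supp}(a)$ is the orthogonal of $\ker(a)$ in $\mathbb{L}$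 with respect to $(x,y)\mapsto\mathrm{Tr}_{\mathbb{L}/\mathbb{K}}(xy)$. For a $\mathbb{K}$-subspace $I\subseteq\mathbb{L}$, $\mathrm{Short}_I(\mathcal{A})=\{a\in\mathcal{A}: I\subseteq\ker(a)\}$. For $x\in\mathbb{L}[G]$, $\mathcal{K}(x)=\{a\in\mathcal{A}:\langle b\circ a,x\rangle_{\mathbb{L}[G]}=0\ \forall b\in\mathcal{B}\}$. *)

(* Defs.v *)
From HB Require Import structures.
From mathcomp Require Import all_boot all_order all_algebra all_fingroup all_field.
Set Implicit Arguments. Unset Strict Implicit. Unset Printing Implicit Defensive.
Import GRing.Theory.
Local Open Scope ring_scope.

(* Setting: K = the base field F, L : splittingFieldType F with galois 1 {:L};
   G = gal_of {:L} = 'Gal({:L} / 1) (all F-automorphisms of L). *)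

Section SkewGroupAlgebra.
Variables (F : fieldType) (L : splittingFieldType F).

Definition Gal := gal_of (fullv : {vspace L}).

(* L[G] = functions G -> L, as an L-vector space (L acting on itself) *)
Definition LG := {ffun Gal -> L^o}.

(* composition product: (a g) o (b h) = (a g(b)) (g o h); with mathcomp's
   convention (x * y)%g z = y (x z), g o h is (h * g)%g. *)
Definition skew_comp (a b : LG) : LG :=
  [ffun k : Gal => \sum_(g : Gal) \sum_(h : Gal | (h * g)%g == k)
                     (a g : L) * g (b h : L)].

Definition skew_act (a : LG) : 'End(L) :=
  (\sum_(g : Gal) (amull (a g : L) \o (g : 'End(L))))%VF.

Definition skew_ker (a : LG) : {vspace L} := lker (skew_act a).
Definition skew_rk (a : LG) : nat := \dim (limg (skew_act a)).

Definition skew_inner (a b : LG) : L := \sum_(g : Gal) (a g : L) * (b g : L).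

Definition in_dual (D : {vspace LG}) (x : LG) : Prop :=
  forall y, y \in D -> skew_inner y x = 0.

(* n < d(D) : every nonzero codeword of D has rank > n
   (d(D) = +infinity when D = 0) *)
Definition lt_mindist (n : nat) (P : LG -> Prop) : Prop :=
  forall x, P x -> x != 0 -> (n < skew_rk x)%N.

(* supp(a) = orthogonal of ker(a) for the trace form (x,y) |-> Tr_{L/K}(xy) *)
Definition in_supp (a : LG) (x : L) : Prop :=
  forall y, y \in skew_ker a -> galTrace 1%VS fullv (x * y) = 0.

Definition in_short_supp (e : LG) (A : {vspace LG}) (a : LG) : Prop :=
  a \in A /\ (forall x, in_supp e x -> x \in skew_ker a).

Definition in_Kset (A B : {vspace LG}) (x : LG) (a : LG) : Prop :=
  a \in A /\ (forall b, b \in B -> skew_inner (skew_comp b a) x = 0).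

End SkewGroupAlgebra.

(* Main.v *)
Require Import Defs.
From HB Require Import structures.
From mathcomp Require Import all_boot all_order all_algebra all_fingroup all_field.
From mathcomp Require Import ring.
Import GRing.Theory.
Local Open Scope ring_scope.
Set Implicit Arguments. Unset Strict Implicit.
Section S.
Variables (F : fieldType) (L : splittingFieldType F).
Local Notation G := (Defs.Gal L).
Local Notation Tr := (galTrace 1%VS (fullv : {vspace L})).

Lemma galE (g : G) : g \in 'Gal(fullv / 1%VS)%g.
Proof. rewrite gal_kHom ?sub1v //; exact: k1AHom. Qed.

Lemma trE u : Tr u = \sum_(g : G) g u.
Proof. rewrite /galTrace; apply: eq_bigl => g; exact: galE. Qed.

Lemma actE (a : LG L) x : skew_act a x = \sum_(g : G) (a g : L) * g x.
Proof. rewrite /skew_act sum_lfunE; apply: eq_bigr => g _. by rewrite comp_lfunE lfunE. Qed.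

Lemma tr_gal (g : G) u : Tr (g u) = Tr u.
Proof.
rewrite !trE [RHS](reindex_inj (mulgI g)) /=; apply: eq_bigr => h _.
by rewrite galM ?memvf.
Qed.

Lemma galVK (g : G) w : g ((g^-1)%g w) = w.
Proof. by rewrite -galM ?memvf // mulVg gal_id. Qed.

Lemma tr_nondeg w : (forall z, Tr (w * z) = 0) -> w = 0.
Proof.
move=> H; apply/eqP/negP => /negP nz.
have Hs : forall t, t \in (fullv : {vspace L}) ->
    \sum_(g : G | predT g) (fun _ => 1) g * g t = 0.
  move=> t _; transitivity (\sum_(g : G) g t).
    by apply: eq_bigr => g _; rewrite mul1r.
  have -> : t = w * (w^-1 * t) by rewrite mulrA mulfV // mul1r.
  by rewrite -trE H.
have := @gal_independent _ _ fullv predT (fun _ => 1) Hs 1%g isT.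
by move/eqP; rewrite oner_eq0.
Qed.

Definition adj (a : LG L) (z : L) : L := \sum_(h : G) (h^-1)%g ((a h : L) * z).

Lemma adjP (a : LG L) x z : Tr (skew_act a x * z) = Tr (x * adj a z).
Proof.
rewrite actE mulr_suml /adj mulr_sumr !raddf_sum; apply: eq_bigr => h _.
have := tr_gal h (x * (h^-1)%g ((a h : L) * z)); rewrite rmorphM /= galVK => <-.
by rewrite mulrA [(a h : L) * _]mulrC.
Qed.

Definition ydef (a e : LG L) : LG L :=
  [ffun g : G => \sum_(h : G) g (a h : L) * (e ((h * g)%g) : L)].

Lemma ydef_inner (a b e : LG L) :
  skew_inner (skew_comp b a) e = skew_inner b (ydef a e).
Proof.
rewrite /skew_inner.
under eq_bigr do rewrite ffunE big_distrl /=.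
rewrite (@exchange_big _ 0 +%R); apply: eq_bigr => g _.
rewrite /ydef ffunE mulr_sumr /=.
under eq_bigr do rewrite big_distrl big_mkcond /=.
rewrite (@exchange_big _ 0 +%R); apply: eq_bigr => h _.
rewrite -big_mkcond (big_pred1 (h * g)%g) /=; last by move=> k; rewrite eq_sym.
by rewrite mulrA.
Qed.

Lemma ydef_act (a e : LG L) x : skew_act (ydef a e) x = skew_act e (adj a x).
Proof.
rewrite !actE /adj /ydef.
under eq_bigr do rewrite ffunE mulr_suml.
rewrite [LHS](@exchange_big _ 0 +%R).
under [RHS]eq_bigr do rewrite rmorph_sum mulr_sumr /=.
rewrite [RHS](@exchange_big _ 0 +%R); apply: eq_bigr => h _.
rewrite [RHS](reindex_inj (mulgI h)) /=; apply: eq_bigr => g _.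
rewrite -galM ?memvf // mulgA mulVg mul1g rmorphM /=; ring.
Qed.

Lemma ydef_rk (a e : LG L) : (skew_rk (ydef a e) <= skew_rk e)%N.
Proof.
apply: dimvS; apply/subvP => _ /memv_imgP[x _ ->].
by rewrite ydef_act memv_img ?memvf.
Qed.

Lemma inner0 (b : LG L) : skew_inner b 0 = 0.
Proof. by rewrite /skew_inner big1 // => g _; rewrite ffunE mulr0. Qed.

Lemma act0 x : skew_act (0 : LG L) x = 0.
Proof. by rewrite actE big1 // => g _; rewrite ffunE mul0r. Qed.

Lemma short_y (a e : LG L) :
  (forall x, in_supp e x -> x \in skew_ker a) -> ydef a e = 0.
Proof.
move=> Hs.
have Hk : forall w, skew_act a (adj e w) = 0.
  move=> w; apply/eqP; rewrite -memv_ker; apply: Hs => y.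
  rewrite memv_ker => /eqP Hy.
  rewrite mulrC; have h0 := adjP e y w; rewrite Hy mul0r raddf0 in h0.
  exact: (esym h0).
have Hz : forall t, skew_act e (adj a t) = 0.
  move=> t; apply: tr_nondeg => w.
  have h1 := adjP e (adj a t) w; have h2 := adjP a (adj e w) t.
  rewrite Hk mul0r raddf0 mulrC in h2; exact: etrans h1 (esym h2).
apply/ffunP => g; rewrite [RHS]ffunE.
apply: (@gal_independent _ _ fullv predT (fun g => ydef a e g)) => // t _.
by rewrite -[LHS]actE ydef_act Hz.
Qed.

Lemma y_short (a e : LG L) :
  ydef a e = 0 -> forall x, in_supp e x -> x \in skew_ker a.
Proof.
move=> Hy x Hx; rewrite memv_ker; apply/eqP; apply: tr_nondeg => z.
apply: etrans (adjP a x z) _; apply: Hx; rewrite memv_ker -ydef_act Hy act0 //.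
Qed.

End S.

Unset Implicit Arguments.
Theorem mainTheorem11 (F : fieldType) (L : splittingFieldType F)
  (HGal : galois 1%VS (fullv : {vspace L}))
  (A B C : {vspace LG L})
  (HBAC : forall a b, a \in A -> b \in B -> in_dual C (skew_comp b a))
  (c e : LG L) (Hc : c \in C) :
  let r := c + e in
  (forall a, in_Kset A B r a <-> in_Kset A B e a) /\
  (forall a, in_short_supp e A a -> in_Kset A B e a) /\
  (lt_mindist (skew_rk e) (in_dual B) ->
     forall a, in_short_supp e A a <-> in_Kset A B e a).
Proof.
move=> r.
have K_eq : forall a b, a \in A -> b \in B ->
    skew_inner (skew_comp b a) r = skew_inner (skew_comp b a) e.
  move=> a b Ha Hb; rewrite /r /skew_inner.
  have cE : forall g, (c + e) g = (c g : L) + e g.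
    by move=> g; rewrite /GRing.add /= /ffun_add ffunE.
  under eq_bigr do rewrite cE mulrDr.
  rewrite big_split /=.
  have := HBAC a b Ha Hb c Hc; rewrite /skew_inner.
  under eq_bigr do rewrite mulrC.
  by move->; rewrite add0r.
have P2 : forall a, in_short_supp e A a -> in_Kset A B e a.
  move=> a [Ha Hs]; split=> // b Bb.
  by rewrite ydef_inner short_y // inner0.
split.
  move=> a; split=> -[Ha Hb]; split=> // b Bb.
    by rewrite -(K_eq a b Ha Bb); apply: Hb.
  by rewrite (K_eq a b Ha Bb); apply: Hb.
split=> // Hmd a; split; first exact: P2.
move=> [Ha Hb]; split=> //; apply: y_short.
have [//|nz] := eqVneq (ydef a e) 0.
have Pd : in_dual B (ydef a e) by move=> y yB; rewrite -ydef_inner; apply: Hb.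
by have := Hmd _ Pd nz; rewrite ltnNge ydef_rk.
Qed.
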